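(* Every continuous valuation on Johnstone's dcpo $\mathcal J$ (with its Scott topology) is point-continuous.
   Context: Johnstone's dcpo: $\mathcal J=\mathbb N\times(\mathbb N\cup\{\infty\})$ ordered by $(a,b)\le(c,d)$ iff either ($a=c$ and $b\le d$) or ($d=\infty$ and $b\le c$). A continuous valuation is a map $\nu:\mathcal OX\to[0,\infty]$ with $\nu(\emptyset)=0$, monotone, modular, and preserving directed suprema of opens. It is point-continuous if for every open $U$ and every real $r$ with $0\le r<\nu(U)$ there is a finite $A\subseteq U$ such that $\nu(V)>r$ for every open $V\supseteq A$. *)

(* Defs.v *)
From Stdlib Require Import Reals List.
From Coquelicot Require Import Rbar.
Open Scope R_scope.

Definition directed_set {X : Type} (le : X -> X -> Prop) (D : X -> Prop) : Prop :=
  (exists x, D x) /\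
  (forall x y, D x -> D y -> exists z, D z /\ le x z /\ le y z).

Definition is_sup {X : Type} (le : X -> X -> Prop) (D : X -> Prop) (s : X) : Prop :=
  (forall d, D d -> le d s) /\
  (forall u, (forall d, D d -> le d u) -> le s u).

Definition scott_open {X : Type} (le : X -> X -> Prop) (U : X -> Prop) : Prop :=
  (forall x y, U x -> le x y -> U y) /\
  (forall D s, directed_set le D -> is_sup le D s -> U s -> exists d, D d /\ U d).

Inductive ninf : Type := Fin (n : nat) | Inf.

Definition ninf_le (b d : ninf) : Prop :=
  match b, d with
  | _, Inf => True
  | Fin m, Fin n => (m <= n)%nat
  | Inf, Fin _ => False
  end.

Definition ninf_le_nat (b : ninf) (c : nat) : Prop :=
  match b with Fin m => (m <= c)%nat | Inf => False end.

Definition J : Type := (nat * ninf)%type.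

Definition J_le (p q : J) : Prop :=
  let (a, b) := p in let (c, d) := q in
  (a = c /\ ninf_le b d) \/ (d = Inf /\ ninf_le_nat b c).

Definition set_union {X : Type} (U V : X -> Prop) : X -> Prop := fun x => U x \/ V x.
Definition set_inter {X : Type} (U V : X -> Prop) : X -> Prop := fun x => U x /\ V x.
Definition set_sub {X : Type} (U V : X -> Prop) : Prop := forall x, U x -> V x.

Definition directed_open_family {X : Type} (isopen : (X -> Prop) -> Prop)
  (F : (X -> Prop) -> Prop) : Prop :=
  (forall U, F U -> isopen U) /\ directed_set set_sub F.

Definition family_union {X : Type} (F : (X -> Prop) -> Prop) : X -> Prop :=
  fun x => exists U, F U /\ U x.

Definition continuous_valuation {X : Type} (isopen : (X -> Prop) -> Prop)
  (nu : (X -> Prop) -> Rbar) : Prop :=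
  (forall U, isopen U -> Rbar_le (Finite 0) (nu U)) /\
  nu (fun _ => False) = Finite 0 /\
  (forall U V, isopen U -> isopen V -> set_sub U V -> Rbar_le (nu U) (nu V)) /\
  (forall U V, isopen U -> isopen V ->
     Rbar_plus (nu U) (nu V) = Rbar_plus (nu (set_union U V)) (nu (set_inter U V))) /\
  (forall F, directed_open_family isopen F ->
     (forall U, F U -> Rbar_le (nu U) (nu (family_union F))) /\
     (forall b : Rbar, (forall U, F U -> Rbar_le (nu U) b) ->
        Rbar_le (nu (family_union F)) b)).

Definition point_continuous {X : Type} (isopen : (X -> Prop) -> Prop)
  (nu : (X -> Prop) -> Rbar) : Prop :=
  forall U (r : R), isopen U -> 0 <= r -> Rbar_lt (Finite r) (nu U) ->
    exists A : list X, (forall x, In x A -> U x) /\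
      forall V, isopen V -> (forall x, In x A -> V x) -> Rbar_lt (Finite r) (nu V).

(* Main.v *)
Require Import Defs.
From Stdlib Require Import Reals List Classical Lra Lia.
From Coquelicot Require Import Rbar.

Definition upper (U : J -> Prop) := forall x y, U x -> J_le x y -> U y.
Definition infc (U : J -> Prop) := forall c, U (c, Inf) -> exists n, U (c, Fin n).
Definition isop U := upper U /\ infc U.

Lemma J_le_refl x : J_le x x.
Proof. destruct x as [a b]; left; split; auto; destruct b; simpl; auto. Qed.

Lemma J_le_trans x y z : J_le x y -> J_le y z -> J_le x z.
Proof.
  destruct x as [a b], y as [c d], z as [e f]; simpl.
  intros [[-> H1]|[-> H1]] [[-> H2]|[-> H2]]; simpl in *.
  - left; split; auto; destruct b, d, f; simpl in *; auto; try lia; contradiction.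
  - right; split; auto; destruct b, d; simpl in *; auto; try lia; contradiction.
  - right; destruct f; simpl in *; [contradiction|]; auto.
  - contradiction.
Qed.

Lemma J_le_inf x z : J_le (x, Inf) z -> z = (x, Inf).
Proof. destruct z as [c d]; simpl. intros [[-> H]|[-> H]]; simpl in *; try contradiction.
  destruct d; simpl in *; [contradiction|auto]. Qed.

Lemma open_isop U : scott_open J_le U -> isop U.
Proof.
  intros [Hup Hsc]; split; [exact Hup|].
  intros c Hc.
  destruct (Hsc (fun d => exists n, d = (c, Fin n)) (c, Inf)) as [d [[n ->] Hd]]; eauto.
  - split; [exists (c, Fin 0); eauto|].
    intros x y [n ->] [m ->]. exists (c, Fin (max n m)); split; [eauto|].
    split; simpl; left; split; auto; simpl; lia.
  - split.
    + intros d [n ->]; simpl; left; auto.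
    + intros [a b] H. destruct b as [k|].
      * destruct (H (c, Fin (S k)) (ex_intro _ _ eq_refl)) as [[_ Hk]|[Hk _]]; simpl in *;
          [lia|discriminate].
      * destruct (H (c, Fin (S a)) (ex_intro _ _ eq_refl)) as [[-> _]|[_ Hk]]; simpl in *.
        -- left; auto.
        -- lia.
Qed.

Lemma isop_open U : isop U -> scott_open J_le U.
Proof.
  intros [Hup Hinf]; split; [exact Hup|].
  intros D s [[d0 Hd0] Hdir] [Hub Hleast] Us.
  apply NNPP; intro Hn.
  assert (HnU : forall d, D d -> ~ U d) by (intros d Dd Ud; apply Hn; eauto).
  destruct s as [c [n|]].
  - destruct (classic (D (c, Fin n))) as [HD|HD]; [exact (HnU _ HD Us)|].
    assert (Hlt : forall d, D d -> exists m, d = (c, Fin m) /\ (m < n)%nat).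
    { intros [a b] Dd. pose proof (Hub _ Dd) as Hle; simpl in Hle.
      destruct Hle as [[-> Hb]|[Hb _]]; [|discriminate].
      destruct b as [m|]; simpl in Hb; [|contradiction].
      exists m; split; auto. destruct (Nat.eq_dec m n) as [->|]; [contradiction|lia]. }
    destruct (Hlt _ Hd0) as [m0 [_ Hm0]].
    assert (Hb : J_le (c, Fin n) (c, Fin (n - 1))).
    { apply Hleast. intros d Dd. destruct (Hlt _ Dd) as [m [-> Hm]]. left; simpl; split; auto; lia. }
    destruct Hb as [[_ Hb]|[Hb _]]; simpl in Hb; [lia|discriminate].
  - destruct (Hinf _ Us) as [k Hk].
    destruct (classic (exists x, D (x, Inf))) as [[x Dx]|Hno].
    + apply (HnU _ Dx). apply (Hup (c, Inf)); auto.
      apply Hleast. intros d Dd. destruct (Hdir _ _ Dd Dx) as [z [Dz [H1 H2]]].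
      apply J_le_inf in H2; subst; auto.
    + assert (Hfin : forall d, D d -> exists a m, d = (a, Fin m)).
      { intros [a [m|]] Dd; eauto. exfalso; eauto. }
      destruct (Hfin _ Hd0) as [a0 [m0 ->]].
      assert (Hcol : forall d, D d -> exists m, d = (a0, Fin m)).
      { intros d Dd. destruct (Hdir _ _ Hd0 Dd) as [z [Dz [H1 H2]]].
        destruct (Hfin _ Dz) as [az [mz ->]]. destruct (Hfin _ Dd) as [ad [md ->]].
        simpl in H1, H2.
        destruct H1 as [[<- _]|[Hx _]]; [|discriminate].
        destruct H2 as [[<- _]|[Hx _]]; [|discriminate]. eauto. }
      assert (Hc : c = a0).
      { assert (Hb : J_le (c, Inf) (a0, Inf)).
        { apply Hleast. intros d Dd. destruct (Hcol _ Dd) as [m ->]. left; simpl; auto. }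
        destruct Hb as [[-> _]|[_ Hb]]; simpl in *; auto; contradiction. }
      subst c.
      assert (Hb : J_le (a0, Inf) (a0, Fin k)).
      { apply Hleast. intros d Dd. destruct (Hcol _ Dd) as [m ->].
        left; simpl; split; auto. destruct (Compare_dec.le_lt_dec k m) as [Hkm|Hkm]; [|lia].
        exfalso; apply (HnU _ Dd). apply (Hup (a0, Fin k)); auto. left; simpl; auto. }
      destruct Hb as [[_ Hb]|[Hb _]]; simpl in Hb; [contradiction|discriminate].
Qed.

Lemma open_iff U : scott_open J_le U <-> isop U.
Proof. split; [apply open_isop|apply isop_open]. Qed.

Lemma isop_empty : isop (fun _ => False).
Proof. split; intros ? ?; contradiction. Qed.

Lemma isop_union V W : isop V -> isop W -> isop (set_union V W).
Proof.
  intros [HV1 HV2] [HW1 HW2]; split.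
  - intros x y [H|H] Hle; [left; eauto|right; eauto].
  - intros c [H|H]; [destruct (HV2 _ H) as [n Hn]|destruct (HW2 _ H) as [n Hn]]; exists n;
    [left|right]; auto.
Qed.

Lemma isop_inter V W : isop V -> isop W -> isop (set_inter V W).
Proof.
  intros [HV1 HV2] [HW1 HW2]; split.
  - intros x y [H1 H2] Hle; split; eauto.
  - intros c [H1 H2]. destruct (HV2 _ H1) as [n Hn], (HW2 _ H2) as [m Hm].
    exists (max n m); split.
    + apply (HV1 _ _ Hn); left; simpl; split; auto; lia.
    + apply (HW1 _ _ Hm); left; simpl; split; auto; lia.
Qed.

Lemma isop_family F : (forall U, F U -> isop U) -> isop (family_union F).
Proof.
  intros HF; split.
  - intros x y [U [FU Ux]] Hle. exists U; split; auto. apply (proj1 (HF _ FU) x); auto.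
  - intros c [U [FU Ux]]. destruct (proj2 (HF _ FU) _ Ux) as [n Hn]. exists n, U; auto.
Qed.

Lemma fin_point V x : isop V -> V x -> exists a n, V (a, Fin n).
Proof.
  intros [_ H2] Vx. destruct x as [a [n|]]; [eauto|].
  destruct (H2 _ Vx) as [n Hn]; eauto.
Qed.

Lemma tail V a n c : upper V -> V (a, Fin n) -> (n <= c)%nat -> V (c, Inf).
Proof. intros Hup H Hc. apply (Hup _ _ H). right; simpl; auto. Qed.

Lemma meet V W x y : isop V -> isop W -> V x -> W y -> exists z, V z /\ W z.
Proof.
  intros HV HW Vx Wy.
  destruct (fin_point _ _ HV Vx) as [a [n Hn]].
  destruct (fin_point _ _ HW Wy) as [b [m Hm]].
  exists (max n m, Inf); split.
  - eapply tail; [apply HV|apply Hn|lia].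
  - eapply tail; [apply HW|apply Hm|lia].
Qed.

Lemma listX U : infc U -> forall N, exists X : list J, (forall y, In y X -> U y) /\
  (forall c, (c < N)%nat -> U (c, Inf) -> exists n, In (c, Fin n) X).
Proof.
  intros Hinf N; induction N as [|N [X [HX1 HX2]]].
  - exists nil; split; [simpl; tauto|intros; lia].
  - destruct (classic (U (N, Inf))) as [HN|HN].
    + destruct (Hinf _ HN) as [n Hn]. exists ((N, Fin n) :: X); split.
      * intros y [<-|Hy]; auto.
      * intros c Hc HUc. destruct (Nat.eq_dec c N) as [->|Hne].
        -- exists n; left; auto.
        -- destruct (HX2 c ltac:(lia) HUc) as [k Hk]; exists k; right; auto.
    + exists X; split; auto. intros c Hc HUc. destruct (Nat.eq_dec c N) as [->|Hne].
      * contradiction.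
      * apply HX2; auto; lia.
Qed.

Definition OL (W : J -> Prop) (L : list J) : J -> Prop :=
  fun x => W x \/ exists y, In y L /\ J_le y x.

Lemma OL_isop U W L N a0 : isop U -> isop W -> W (a0, Fin N) ->
  (forall y, In y L -> U y) ->
  (forall c, (c < N)%nat -> U (c, Inf) -> exists n, In (c, Fin n) L) -> isop (OL W L).
Proof.
  intros [HU1 HU2] [HW1 HW2] HN HL HX; split.
  - intros x z [Hx|[y [Hy Hle]]] Hle'; [left; eauto|right; exists y; split; auto].
    eapply J_le_trans; eauto.
  - intros c [Hc|[y [Hy Hle]]].
    + destruct (HW2 _ Hc) as [n Hn]; exists n; left; auto.
    + assert (Uc : U (c, Inf)) by (apply (HU1 y); auto).
      destruct (Compare_dec.lt_dec c N) as [Hlt|Hge].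
      * destruct (HX _ Hlt Uc) as [n Hn]. exists n; right; exists (c, Fin n); split; auto.
        apply J_le_refl.
      * assert (Wc : W (c, Inf)) by (eapply tail; [exact HW1|exact HN|lia]).
        destruct (HW2 _ Wc) as [n Hn]; exists n; left; auto.
Qed.

Theorem corollary3p10 (nu : (J -> Prop) -> Rbar) :
  continuous_valuation (scott_open J_le) nu ->
  point_continuous (scott_open J_le) nu.
Proof.
  intros [H0 [Hempty [Hmono [Hmod Hsup]]]] U r HU Hr HrU.
  assert (Hne : exists x0, U x0).
  { apply NNPP; intro Hn.
    assert (Hle : Rbar_le (nu U) (nu (fun _ => False))).
    { apply Hmono; auto. apply isop_open, isop_empty. intros x Ux; apply Hn; eauto. }
    rewrite Hempty in Hle. pose proof (Rbar_lt_le_trans _ _ _ HrU Hle) as Hc.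
    simpl in Hc; lra. }
  destruct Hne as [x0 Ux0].
  destruct (classic (forall W, scott_open J_le W -> (exists x, W x) -> Rbar_lt (Finite r) (nu W)))
    as [Hall|Hnot].
  { exists (x0 :: nil); split.
    - intros x [<-|[]]; auto.
    - intros V HV HA. apply Hall; auto. exists x0; apply HA; left; auto. }
  apply not_all_ex_not in Hnot; destruct Hnot as [W0 Hnot].
  apply imply_to_and in Hnot; destruct Hnot as [HW0 Hnot].
  apply imply_to_and in Hnot; destruct Hnot as [HW0ne Hnot].
  apply Rbar_not_lt_le in Hnot.
  assert (Hw0 : exists w0, nu W0 = Finite w0).
  { pose proof (H0 _ HW0) as Hp. destruct (nu W0) as [w0| |]; simpl in *; eauto; contradiction. }
  destruct Hw0 as [w0 Hw0].
  set (E := fun y : R => exists W, scott_open J_le W /\ (exists x, W x) /\ nu W = Finite (- y)).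
  assert (HEb : bound E).
  { exists 0. intros y [W [HW [_ HWy]]]. pose proof (H0 _ HW) as Hp. rewrite HWy in Hp.
    simpl in Hp; lra. }
  assert (HEn : exists y, E y).
  { exists (- w0). exists W0; split; [auto|split; [auto|]]. rewrite Hw0; f_equal; ring. }
  destruct (completeness E HEb HEn) as [m [Hm1 Hm2]].
  set (t := - m).
  assert (Htlow : forall W, scott_open J_le W -> (exists x, W x) -> Rbar_le (Finite t) (nu W)).
  { intros W HW HWne. pose proof (H0 _ HW) as Hp.
    destruct (nu W) as [w| |] eqn:Hw; simpl in *; [|auto|contradiction].
    assert (E (- w)) by (exists W; split; [auto|split; [auto|]]; rewrite Hw; f_equal; ring).
    pose proof (Hm1 _ H). unfold t; lra. }
  assert (Heps : exists eps, 0 < eps /\ Rbar_lt (Finite (r + eps)) (nu U)).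
  { destruct (nu U) as [u| |]; simpl in HrU.
    - exists ((u - r) / 2); split; simpl; lra.
    - exists 1; split; simpl; auto; lra.
    - contradiction. }
  destruct Heps as [eps [Heps HeU]].
  assert (Hnear : exists W w, scott_open J_le W /\ (exists x, W x) /\ nu W = Finite w /\ w < t + eps).
  { apply NNPP; intro Hn.
    assert (Hub : is_upper_bound E (m - eps)).
    { intros y [W [HW [HWne HWy]]]. destruct (Rle_dec y (m - eps)) as [|Hy]; auto.
      apply Rnot_le_lt in Hy. exfalso; apply Hn. exists W, (- y); split; [auto|split; [auto|split; [auto|unfold t; lra]]]. }
    pose proof (Hm2 _ Hub); lra. }
  destruct Hnear as [W [w [HW [HWne [Hw Hwt]]]]].
  pose proof (open_isop _ HU) as HUi. pose proof (open_isop _ HW) as HWi.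
  destruct (HWne) as [xw0 Hxw0]. destruct (fin_point _ _ HWi Hxw0) as [a0 [N HN]].
  destruct (listX U (proj2 HUi) N) as [X [HX1 HX2]].
  set (F := fun O' : J -> Prop => exists A, (forall y, In y A -> U y) /\ O' = OL W (A ++ X)).
  assert (HFop : forall O', F O' -> isop O').
  { intros O' [A [HA ->]]. apply (OL_isop U W _ N a0 HUi HWi HN).
    - intros y Hy. apply in_app_or in Hy; destruct Hy; auto.
    - intros c Hc HUc. destruct (HX2 c Hc HUc) as [n Hn]. exists n; apply in_or_app; right; auto. }
  assert (HA : exists A, (forall y, In y A -> U y) /\ Rbar_lt (Finite (r + eps)) (nu (OL W (A ++ X)))).
  { apply NNPP; intro Hn.
    assert (Hdir : directed_open_family (scott_open J_le) F).
    { split; [intros O' HO'; apply isop_open, HFop; auto|].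
      split.
      - exists (OL W (nil ++ X)), nil; split; simpl; auto; tauto.
      - intros O1 O2 [A1 [HA1 ->]] [A2 [HA2 ->]]. exists (OL W ((A1 ++ A2) ++ X)); split.
        + exists (A1 ++ A2); split; auto. intros y Hy; apply in_app_or in Hy; destruct Hy; auto.
        + split; intros x [Hx|[y [Hy Hle]]]; try (left; auto; fail); right; exists y; split; auto;
            apply in_app_or in Hy; apply in_or_app; destruct Hy; auto; left; apply in_or_app; auto. }
    destruct (Hsup F Hdir) as [_ Hs].
    assert (Hb : Rbar_le (nu (family_union F)) (Finite (r + eps))).
    { apply Hs. intros O' [A [HA' ->]]. apply Rbar_not_lt_le. intro Hc. apply Hn; eauto. }
    assert (Hsub : Rbar_le (nu U) (nu (family_union F))).
    { apply Hmono; auto.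
      - apply isop_open, isop_family; auto.
      - intros x Ux. exists (OL W ((x :: nil) ++ X)). split.
        + exists (x :: nil); split; auto. intros y [<-|[]]; auto.
        + right. exists x; split; [left; auto|apply J_le_refl]. }
    pose proof (Rbar_lt_le_trans _ _ _ HeU (Rbar_le_trans _ _ _ Hsub Hb)) as Hc.
    simpl in Hc; lra. }
  destruct HA as [A [HA HAlt]].
  exists (x0 :: A ++ X); split.
  { intros y [<-|Hy]; auto. apply in_app_or in Hy; destruct Hy; auto. }
  intros V HV HVA.
  pose proof (open_isop _ HV) as HVi.
  assert (HVW : scott_open J_le (set_union V W)) by (apply isop_open, isop_union; auto).
  assert (HVW' : scott_open J_le (set_inter V W)) by (apply isop_open, isop_inter; auto).
  assert (Hle1 : Rbar_le (nu (OL W (A ++ X))) (nu (set_union V W))).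
  { apply Hmono; auto.
    - apply isop_open, (HFop _ (ex_intro _ A (conj HA eq_refl))).
    - intros x [Hx|[y [Hy Hle]]]; [right; auto|left].
      apply (proj1 HVi y); auto. apply HVA; right; auto. }
  assert (Hle2 : Rbar_le (Finite t) (nu (set_inter V W))).
  { apply Htlow; auto. destruct HWne as [xw Hxw].
    destruct (meet V W x0 xw HVi HWi) as [z Hz]; auto. apply HVA; left; auto.
    exists z; auto. }
  pose proof (Rbar_lt_le_trans _ _ _ HAlt Hle1) as Hlt1.
  pose proof (Hmod V W HV HW) as Hm. rewrite Hw in Hm.
  pose proof (H0 _ HV) as HV0.
  destruct (nu V) as [v| |]; [|simpl; auto|simpl in HV0; contradiction].
  destruct (nu (set_union V W)) as [a| |]; simpl in Hlt1; try contradiction;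
  destruct (nu (set_inter V W)) as [b| |]; simpl in Hle2; try contradiction;
  simpl in Hm; try discriminate.
  injection Hm; intro; simpl; lra.
Qed.
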